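(* Let $\mathbf{k}$ be a commutative ring and $H$ a commutative connected graded $\mathbf{k}$-Hopf algebra with antipode $S_H$. Let $\beta_H:H\to H\otimes\mathrm{QSym}_{\mathbf{k}}$ be given by $\beta_H(h)=\sum_{\alpha\in\mathrm{Comp}}\xi_\alpha(h)\otimes M_\alpha$. Then $$S_H=(\mathrm{id}_H\otimes(\varepsilon_P\circ S_{\mathrm{QSym}_{\mathbf{k}}}))\circ\beta_H,$$ where $S_{\mathrm{QSym}_{\mathbf{k}}}$ is the antipode of $\mathrm{QSym}_{\mathbf{k}}$ and $H\otimes\mathbf{k}$ is identified with $H$.
   Context: A composition is a finite sequence of positive integers; $\mathrm{Comp}$ the set of compositions. $\mathrm{QSym}_{\mathbf{k}}\subseteq\mathbf{k}[[x_1,x_2,\ldots]]$ is the Hopf algebra of quasisymmetric functions with monomial basis $M_\alpha=\sum_{1\le i_1<\cdots<i_\ell}x_{i_1}^{\alpha_1}\cdots x_{i_\ell}^{\alpha_\ell}$ for $\alpha=(\alpha_1,\ldots,\alpha_\ell)$. $\varepsilon_P:\mathrm{QSym}_{\mathbf{k}}\to\mathbf{k}$ is $f\mapsto f(1,0,0,\ldots)$. For $\alpha=(a_1,\ldots,a_k)$, $\xi_\alpha=m^{(k-1)}\circ\pi_\alpha\circ\Delta^{(k-1)}:H\to H$, where $\Delta^{(k-1)}:H\to H^{\otimes k}$ is the iterated comultiplication ($\Delta^{(-1)}=\varepsilon$, $\Delta^{(0)}=\mathrm{id}$, $\Delta^{(k)}=(\mathrm{id}\otimes\Delta^{(k-1)})\circ\Delta$),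 $m^{(k-1)}:H^{\otimes k}\to H$ is $h_1\otimes\cdots\otimes h_k\mapsto h_1\cdots h_k$ ($m^{(-1)}$ the unit), and $\pi_\alpha=\pi_{a_1}\otimes\cdots\otimes\pi_{a_k}$ with $\pi_n:H\to H$ the projection onto the degree-$n$ component $H_n$. The sum defining $\beta_H(h)$ has finitely many nonzero terms. *)

(* Defs.v *)
From mathcomp Require Import all_boot all_order all_algebra.
Set Implicit Arguments. Unset Strict Implicit. Unset Printing Implicit Defensive.
Import GRing.Theory.
Local Open Scope ring_scope.

Definition is_comp (a : seq nat) : bool := all (fun n => (0 < n)%N) a.

(* Tensor powers, represented by finite formal sums of pure tensors    *)
(* (each pure tensor u_1 (x) ... (x) u_n is a list [:: u_1; ..; u_n]). *)
(* Two formal sums represent the same element of H^{(x) n} iff every   *)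
(* k-multilinear map out of H^n into any k-module agrees on them       *)
(* (universal property of the tensor product).                         *)
Section Tensor.
Variables (k : comNzRingType) (H : lmodType k).

Definition multilinear (n : nat) (M : lmodType k) (f : seq H -> M) : Prop :=
  forall (l : seq H) (i : nat) (a : k) (x y : H), size l = n -> (i < n)%N ->
    f (set_nth 0 l i (a *: x + y)) =
    a *: f (set_nth 0 l i x) + f (set_nth 0 l i y).

Definition teq (n : nat) (s t : seq (seq H)) : Prop :=
  forall (M : lmodType k) (f : seq H -> M), multilinear n f ->
    \sum_(u <- s) f u = \sum_(u <- t) f u.

Definition t2 (s : seq (H * H)) : seq (seq H) := [seq [:: p.1; p.2] | p <- s].
End Tensor.

(*   delta h : a formal sum representing Delta(h) in H (x) H           *)
(*   pi n    : projection onto the degree-n component H_n              *)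
(*             (x \in H_n  <->  pi n x = x).                           *)
Section Hopf.
Variables (k : comNzRingType) (H : comAlgType k).
Variables (delta : H -> seq (H * H)) (eps : H -> k) (S : H -> H)
          (pi : nat -> H -> H).

Record is_cc_graded_hopf : Prop := {
  pi_lin : forall n a x y, pi n (a *: x + y) = a *: pi n x + pi n y;
  pi_proj : forall n m h, pi n (pi m h) = if n == m then pi n h else 0;
  pi_decomp : forall h, exists N : nat,
      (forall m, (N <= m)%N -> pi m h = 0) /\ h = \sum_(n < N) pi n h;
  pi_one : pi 0 1 = 1;
  pi_mul : forall i j x y, pi i x = x -> pi j y = y ->
      pi (i + j) (x * y) = x * y;
  connected : forall h, exists c : k, pi 0 h = c *: 1;
  eps_lin : forall a x y, eps (a *: x + y) = a * eps x + eps y;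
  delta_lin : forall a x y,
      teq 2 (t2 (delta (a *: x + y)))
            (t2 ([seq (a *: p.1, p.2) | p <- delta x] ++ delta y));
  coassoc : forall h,
      teq 3 (flatten [seq [seq [:: q.1; q.2; p.2] | q <- delta p.1] | p <- delta h])
            (flatten [seq [seq [:: p.1; q.1; q.2] | q <- delta p.2] | p <- delta h]);
  counit_l : forall h, \sum_(p <- delta h) eps p.1 *: p.2 = h;
  counit_r : forall h, \sum_(p <- delta h) eps p.2 *: p.1 = h;
  eps_graded : forall n h, (0 < n)%N -> pi n h = h -> eps h = 0;
  delta_graded : forall n h, pi n h = h ->
      teq 2 (t2 (delta h))
            (t2 (flatten [seq [seq (pi i p.1, pi (n - i) p.2) | i <- iota 0 n.+1]
                        | p <- delta h]));
  eps_one : eps 1 = 1;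
  eps_mul : forall x y, eps (x * y) = eps x * eps y;
  delta_one : teq 2 (t2 (delta 1)) [:: [:: 1; 1]];
  delta_mul : forall x y,
      teq 2 (t2 (delta (x * y)))
            (t2 (flatten [seq [seq (p.1 * q.1, p.2 * q.2) | q <- delta y]
                        | p <- delta x]));
  S_lin : forall a x y, S (a *: x + y) = a *: S x + S y;
  antipode_l : forall h, \sum_(p <- delta h) S p.1 * p.2 = eps h *: 1;
  antipode_r : forall h, \sum_(p <- delta h) p.1 * S p.2 = eps h *: 1
}.

(* Iterated comultiplication: delta_iter n = Delta^{(n)} : H -> H^{(x)(n+1)},
   Delta^{(0)} = id, Delta^{(n+1)} = (id (x) Delta^{(n)}) o Delta. *)
Fixpoint delta_iter (n : nat) (h : H) : seq (seq H) :=
  match n with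
  | 0 => [:: [:: h]]
  | n'.+1 => flatten [seq [seq p.1 :: t | t <- delta_iter n' p.2] | p <- delta h]
  end.

(* xi_alpha = m^{(l-1)} o pi_alpha o Delta^{(l-1)}, l = length of alpha;
   for alpha = empty: m^{(-1)} o eps = eps(-) 1_H. *)
Definition xi (alpha : seq nat) (h : H) : H :=
  match alpha with
  | [::] => eps h *: 1
  | _ => \sum_(t <- delta_iter (size alpha).-1 h)
           \prod_(i < size alpha) pi (nth 0%N alpha i) (nth 0 t i)
  end.
End Hopf.

(* QSym_k in its monomial basis.  An element is a finite formal sum    *)
(* sum_j c_j M_{alpha_j}, given as a list of pairs (c_j, alpha_j).     *)
Section QSym.
Variable k : comNzRingType.

Definition qsym := seq (k * seq nat).

Definition coefQ (f : qsym) (gamma : seq nat) : k :=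
  \sum_(p <- f | p.2 == gamma) p.1.

(* quasi-shuffle (stuffle): M_a M_b = sum_{g <- stuffle a b} M_g,
   the product of the power series M_a, M_b in k[[x_1,x_2,...]]. *)
Fixpoint stuffle (a b : seq nat) {struct a} : seq (seq nat) :=
  match a with
  | [::] => [:: b]
  | x :: a' =>
      let fix st (b : seq nat) : seq (seq nat) :=
        match b with
        | [::] => [:: a]
        | y :: b' => [seq x :: s | s <- stuffle a' b]
                     ++ [seq y :: s | s <- st b']
                     ++ [seq (x + y)%N :: s | s <- stuffle a' b']
        end in st b
  end.

Definition mulQ (f g : qsym) : qsym :=
  flatten [seq flatten [seq [seq (p.1 * q.1, s) | s <- stuffle p.2 q.2] | q <- g]
          | p <- f].

Definition sumQ (fs : seq qsym) : qsym := flatten fs.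

(* SQ alpha = S_QSym(M_alpha) (the antipode is determined by its values on
   the basis and extended k-linearly).  Coproduct of QSym: deconcatenation
   Delta(M_alpha) = sum_{i=0}^{l} M_{take i alpha} (x) M_{drop i alpha};
   counit M_alpha |-> [alpha = empty]; unit M_empty. *)
Definition is_QSym_antipode (SQ : seq nat -> qsym) : Prop :=
  (forall alpha, is_comp alpha -> all (fun p => is_comp p.2) (SQ alpha)) /\
  (forall alpha gamma, is_comp alpha -> is_comp gamma ->
     coefQ (sumQ [seq mulQ (SQ (take i alpha)) [:: (1, drop i alpha)]
                 | i <- iota 0 (size alpha).+1]) gamma
     = if (alpha == [::]) && (gamma == [::]) then 1 else 0) /\
  (forall alpha gamma, is_comp alpha -> is_comp gamma ->
     coefQ (sumQ [seq mulQ [:: (1, take i alpha)] (SQ (drop i alpha))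
                 | i <- iota 0 (size alpha).+1]) gamma
     = if (alpha == [::]) && (gamma == [::]) then 1 else 0).

(* eps_P(f) = f(1,0,0,...):  M_gamma(1,0,0,...) = 1 if l(gamma) <= 1, else 0
   (only the term i_1 = 1 survives, and it needs l(gamma) <= 1). *)
Definition M_at_e1 (gamma : seq nat) : k := (size gamma <= 1)%N%:R.
Definition epsP (f : qsym) : k := \sum_(p <- f) p.1 * M_at_e1 p.2.
End QSym.

Definition comp_fsum_eq (V : zmodType) (t : seq nat -> V) (v : V) : Prop :=
  (exists L : seq (seq nat),
      forall alpha, is_comp alpha -> t alpha != 0 -> alpha \in L) /\
  (forall L : seq (seq nat), uniq L -> all is_comp L ->
      (forall alpha, is_comp alpha -> t alpha != 0 -> alpha \in L) ->
      v = \sum_(alpha <- L) t alpha).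

(* Main.v *)
Require Import Defs.
From mathcomp Require Import all_boot all_order all_algebra zify.
Set Implicit Arguments. Unset Strict Implicit. Unset Printing Implicit Defensive.
Import GRing.Theory.
Local Open Scope ring_scope.

Fixpoint compsF (f n : nat) {struct f} : seq (seq nat) :=
  if n is 0 then [:: [::]] else
  if f is f'.+1 then
    flatten [seq [seq j :: c | c <- compsF f' (n - j)] | j <- iota 1 n]
  else [::].

Section HopfPart.
Variables (k : comNzRingType) (H : comAlgType k).
Variables (delta : H -> seq (H * H)) (eps : H -> k) (S : H -> H)
          (pi : nat -> H -> H).
Hypothesis hH : is_cc_graded_hopf delta eps S pi.

Definition lin (f : H -> H) := forall a x y, f (a *: x + y) = a *: f x + f y.

Lemma lin0 f : lin f -> f 0 = 0.
Proof.
move=> hf; have h := hf 1 0 0; rewrite !scale1r addr0 in h.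
have : f 0 + f 0 - f 0 = f 0 - f 0 by rewrite -h.
by rewrite addrK subrr.
Qed.

Lemma linD f : lin f -> forall x y, f (x + y) = f x + f y.
Proof. by move=> hf x y; have := hf 1 x y; rewrite !scale1r. Qed.

Lemma linZ f : lin f -> forall a x, f (a *: x) = a *: f x.
Proof. by move=> hf a x; rewrite -[a *: x]addr0 hf (lin0 hf) addr0. Qed.

Lemma lin_sum f (I : Type) (r : seq I) (P : pred I) (F : I -> H) : lin f ->
  f (\sum_(i <- r | P i) F i) = \sum_(i <- r | P i) f (F i).
Proof.
move=> hf; apply: (big_morph f (linD hf) (lin0 hf)).
Qed.

Lemma lin_pi n : lin (pi n).
Proof. by move=> a x y; apply: (pi_lin hH). Qed.

Lemma lin_S : lin S.
Proof. by move=> a x y; apply: (S_lin hH). Qed.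

Lemma eps0 : eps 0 = 0.
Proof.
have h := eps_lin hH 1 0 0; rewrite scale1r addr0 mul1r in h.
have : eps 0 + eps 0 - eps 0 = eps 0 - eps 0 by rewrite -h.
by rewrite addrK subrr.
Qed.

Lemma epsD x y : eps (x + y) = eps x + eps y.
Proof. by have := eps_lin hH 1 x y; rewrite scale1r mul1r. Qed.

Lemma eps_sum (I : Type) (r : seq I) (F : I -> H) :
  eps (\sum_(i <- r) F i) = \sum_(i <- r) eps (F i).
Proof. apply: (big_morph eps epsD eps0). Qed.

Lemma epsZ a x : eps (a *: x) = a * eps x.
Proof. by rewrite -[a *: x]addr0 (eps_lin hH) eps0 addr0. Qed.

Lemma pi_idem n x : pi n (pi n x) = pi n x.
Proof. by rewrite (pi_proj hH) eqxx. Qed.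

Lemma pi0_eps x : pi 0 x = eps x *: 1.
Proof.
have [c hc] := connected hH x.
have ec : eps (pi 0 x) = c by rewrite hc epsZ (eps_one hH) mulr1.
have -> : eps x = eps (pi 0 x).
  have [N [_ hN]] := pi_decomp hH x.
  case: N hN => [|N] hN.
    by rewrite hN big_ord0 (lin0 (lin_pi 0)) eps0.
  rewrite {1}hN big_ord_recl epsD eps_sum.
  rewrite big1 ?eps0 ?addr0 // => i _.
  by apply: (eps_graded hH (n := (bump 0 i))) => //; rewrite pi_idem.
by rewrite ec hc.
Qed.

Lemma ml2 f g : lin f -> lin g ->
  multilinear 2 (fun l : seq H => f (nth 0 l 0) * g (nth 0 l 1)).
Proof.
move=> hf hg l i a x y.
case: l => [|u [|v [|w l]]] //= _.
case: i => [|[|i]] //= _.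
  by rewrite hf mulrDl scalerAl.
by rewrite hg mulrDr scalerAr.
Qed.

Lemma teq2_apply (s t : seq (H * H)) f g : lin f -> lin g ->
  teq 2 (t2 s) (t2 t) ->
  \sum_(p <- s) f p.1 * g p.2 = \sum_(p <- t) f p.1 * g p.2.
Proof.
move=> hf hg ht; have := ht _ _ (ml2 hf hg).
by rewrite /t2 !big_map.
Qed.

Lemma graded n z f g : pi n z = z -> lin f -> lin g ->
  \sum_(p <- delta z) f p.1 * g p.2 =
  \sum_(p <- delta z) \sum_(j <- iota 0 n.+1) f (pi j p.1) * g (pi (n - j) p.2).
Proof.
move=> hz hf hg; rewrite (teq2_apply hf hg (delta_graded hH hz)).
rewrite big_flatten big_map; apply: eq_bigr => p _.
by rewrite big_map.
Qed.

Lemma sum_if_eq (V : zmodType) (r : seq nat) (s : nat) (X : V) : uniq r ->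
  \sum_(m <- r) (if m == s then X else 0) = if s \in r then X else 0.
Proof.
elim: r => [|a r IH] /=; first by rewrite big_nil.
move=> /andP [ar ur]; rewrite big_cons IH // in_cons.
have [<-|ne] := eqVneq a s.
  by rewrite (negbTE ar) addr0.
by rewrite add0r.
Qed.

Lemma graded_pi n z i g : pi n z = z -> lin g ->
  \sum_(p <- delta z) pi i p.1 * g p.2 =
  if (i <= n)%N then \sum_(p <- delta z) pi i p.1 * g (pi (n - i) p.2) else 0.
Proof.
move=> hz hg; rewrite (graded hz (lin_pi i) hg).
have e : forall p : H * H, \sum_(j <- iota 0 n.+1) pi i (pi j p.1) * g (pi (n - j) p.2)
   = if (i <= n)%N then pi i p.1 * g (pi (n - i) p.2) else 0.
  move=> p; have -> : (i <= n)%N = (i \in iota 0 n.+1) by rewrite mem_iota.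
  rewrite -(sum_if_eq _ _ (iota_uniq 0 n.+1)); apply: eq_bigr => j _.
  by rewrite (pi_proj hH); case: eqVneq => [->|]; rewrite ?eqxx ?mul0r // eq_sym => /negbTE ->.
under eq_bigr do rewrite e.
by case: (i <= n)%N => //; rewrite big1.
Qed.


Notation Xi := (xi delta eps pi).

Lemma xi_cons j a z : Xi (j :: a) z = \sum_(p <- delta z) pi j p.1 * Xi a p.2.
Proof.
case: a => [|b a].
  rewrite /xi /= big_cons big_nil addr0 big_ord1 /=.
  under eq_bigr do rewrite -scalerAr mulr1.
  under eq_bigr do rewrite -(linZ (lin_pi j)).
  rewrite -lin_sum; last exact: lin_pi.
  congr (pi j _); symmetry; exact: (counit_r hH).
rewrite /xi /= big_flatten big_map; apply: eq_bigr => p _.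
rewrite big_map mulr_sumr; apply: eq_bigr => t _.
by rewrite big_ord_recl /=.
Qed.

Lemma lin_xi a : lin (Xi a).
Proof.
elim: a => [|j a IH] c x y.
  by rewrite /xi (eps_lin hH) scalerDl scalerA.
rewrite !xi_cons (teq2_apply (lin_pi j) IH (delta_lin hH c x y)).
rewrite big_cat big_map /= scaler_sumr; congr (_ + _); apply: eq_bigr => p _.
by rewrite (linZ (lin_pi j)) scalerAl.
Qed.

Lemma xi_vanish a : forall n y, pi n y = y -> sumn a != n -> Xi a y = 0.
Proof.
elim: a => [|j a IH] n y hy hn.
  rewrite /xi (eps_graded hH _ hy) ?scale0r //.
  by rewrite lt0n eq_sym.
rewrite xi_cons (graded_pi j hy (lin_xi a)).
case: ifP => // jn; rewrite big1 // => p _.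
rewrite (IH (n - j)%N) ?mulr0 ?pi_idem //.
apply: contra hn => /eqP e; by rewrite /= e subnKC.
Qed.


Definition sg (a : seq nat) : k := (-1) ^+ size a.

Lemma antipode_step n z : pi n z = z ->
  S z + \sum_(j <- iota 1 n) \sum_(p <- delta z) pi j p.1 * S (pi (n - j) p.2)
  = eps z *: 1.
Proof.
move=> hz; rewrite -(antipode_r hH z).
have lid : lin id by [].
rewrite (graded hz lid lin_S).
have -> : iota 0 n.+1 = 0%N :: iota 1 n by [].
under [RHS]eq_bigr do rewrite big_cons.
rewrite big_split /= [X in _ = _ + X]exchange_big; congr (_ + _).
under eq_bigr do rewrite pi0_eps -scalerAl mul1r subn0.
transitivity (S (pi n (\sum_(i <- delta z) eps i.1 *: i.2))).
  by rewrite (counit_l hH) hz.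
rewrite (lin_sum _ _ _ (lin_pi n)) (lin_sum _ _ _ lin_S).
by apply: eq_bigr => p _; rewrite (linZ (lin_pi n)) (linZ lin_S).
Qed.

Lemma S_deg0 z : pi 0 z = z -> S z = eps z *: 1.
Proof. by move=> hz; have := antipode_step hz; rewrite big_nil addr0. Qed.

Lemma main_deg f : forall n, (n <= f)%N -> forall z, pi n z = z ->
  S z = \sum_(a <- compsF f n) sg a *: Xi a z.
Proof.
elim: f => [|f IH] [|n] hn z hz //.
- by rewrite /= big_cons big_nil addr0 /sg expr0 scale1r (S_deg0 hz).
- by rewrite /= big_cons big_nil addr0 /sg expr0 scale1r (S_deg0 hz).
have st := antipode_step hz.
rewrite (eps_graded hH _ hz) // scale0r in st.
rewrite -[S z](addrK (\sum_(j <- iota 1 n.+1) \sum_(p <- delta z) pi j p.1 * S (pi (n.+1 - j) p.2))) st sub0r.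
have -> : compsF f.+1 n.+1 = flatten [seq [seq j :: c | c <- compsF f (n.+1 - j)] | j <- iota 1 n.+1] by [].
rewrite big_flatten big_map -sumrN; apply: eq_big_seq => j.
rewrite mem_iota => /andP [j1 jn]; rewrite add1n ltnS in jn.
rewrite big_map.
have E : forall c, \sum_(p <- delta z) pi j p.1 * Xi c (pi (n.+1 - j) p.2) = Xi (j :: c) z.
  by move=> c; rewrite xi_cons (graded_pi j hz (lin_xi c)) jn.
apply/eqP; rewrite eqr_oppLR; apply/eqP.
have IH' : forall y, S (pi (n.+1 - j) y) = \sum_(c <- compsF f (n.+1 - j)) sg c *: Xi c (pi (n.+1 - j) y).
  by move=> y; apply: IH; [lia| exact: pi_idem].
under [LHS]eq_bigr do rewrite IH' mulr_sumr.
rewrite exchange_big -sumrN; apply: eq_bigr => c _.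
rewrite -E /sg (_ : size (j :: c) = (size c).+1) // exprS mulN1r scaleNr opprK scaler_sumr; apply: eq_bigr => p _.
by rewrite scalerAr.
Qed.

End HopfPart.

Lemma compsF_mem f : forall n a, (n <= f)%N ->
  (a \in compsF f n) = is_comp a && (sumn a == n).
Proof.
elim: f => [|f IH] [|n] a hn //.
- case: a => [|x a] //=; rewrite mem_seq1; case: x => [|x] //=; rewrite andbF //.
- case: a => [|x a] //=; rewrite mem_seq1; case: x => [|x] //=; rewrite andbF //.
apply/allpairsPdep/andP.
  move=> [j [c [jin cin ->]]].
  rewrite mem_iota in jin; rewrite IH in cin; last by lia.
  move/andP: cin => [cc /eqP sc] /=; split; first by rewrite cc andbT; lia.
  apply/eqP; rewrite sc; lia.
case: a => [|x c] [ca /eqP sa] //.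
move: ca => /andP [x0 cc]; exists x, c; split.
- rewrite mem_iota; move: sa => /=; lia.
- rewrite IH; last by move: sa => /=; lia.
  apply/andP; split; first exact: cc.
  apply/eqP; move: sa => /=; lia.
- by [].
Qed.

Lemma compsF_uniq f n : uniq (compsF f n).
Proof.
elim: f n => [|f IH] [|n] //.
apply: allpairs_uniq_dep; first exact: iota_uniq.
  by move=> j _; apply: IH.
by move=> [x y] [x' y'] _ _ /= [-> ->].
Qed.

Section QSymPart.
Variable k : comNzRingType.

Lemma stuffle_cons x a y b : stuffle (x :: a) (y :: b) =
  [seq x :: s | s <- stuffle a (y :: b)] ++ [seq y :: s | s <- stuffle (x :: a) b]
  ++ [seq (x + y)%N :: s | s <- stuffle a b].
Proof. by []. Qed.

Lemma stuffle_nil_r x a : stuffle (x :: a) [::] = [:: x :: a].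
Proof. by []. Qed.

Lemma stuffle_size a : forall b s, s \in stuffle a b ->
  (maxn (size a) (size b) <= size s)%N.
Proof.
elim: a => [|x a IHa] b s.
  by rewrite /= inE => /eqP ->; rewrite max0n.
elim: b s => [|y b IHb] s.
  by rewrite stuffle_nil_r inE => /eqP ->; rewrite maxn0.
rewrite stuffle_cons !mem_cat => /or3P [] /mapP [t ht ->].
- have := IHa _ _ ht; rewrite /=; lia.
- have := IHb _ ht; rewrite /=; lia.
- have := IHa _ _ ht; rewrite /=; lia.
Qed.

Lemma stuffle_comp a : forall b, is_comp a -> is_comp b -> all is_comp (stuffle a b).
Proof.
elim: a => [|x a IHa] b ca cb.
  by rewrite /= cb.
elim: b cb => [|y b IHb] cb.
  by rewrite stuffle_nil_r; apply/allP => s; rewrite mem_seq1 => /eqP ->.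
move: ca cb => /andP [x0 ca] /andP [y0 cb].
apply/allP => s; rewrite stuffle_cons !mem_cat => /or3P [] /mapP [t ht ->] /=.
- by rewrite x0 (allP (IHa (y :: b) ca _)) //= y0.
- by rewrite y0 (allP (IHb cb)).
- by rewrite addn_gt0 x0 (allP (IHa b ca cb)).
Qed.

Lemma stuffle_e1 a b : \sum_(s <- stuffle a b) M_at_e1 k s = M_at_e1 k a * M_at_e1 k b.
Proof.
have [ha|ha] := leqP (size a) 1; last first.
  rewrite {2}/M_at_e1 leqNgt ha mul0r big1_seq // => s /stuffle_size.
  by rewrite /M_at_e1 => hs; rewrite leqNgt (leq_trans ha) // (leq_trans _ hs) // leq_maxl.
have [hb|hb] := leqP (size b) 1; last first.
  rewrite {3}/M_at_e1 leqNgt hb mulr0 big1_seq // => s /stuffle_size.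
  by rewrite /M_at_e1 => hs; rewrite leqNgt (leq_trans hb) // (leq_trans _ hs) // leq_maxr.
case: a ha => [|x [|? ?]] // _; case: b hb => [|y [|? ?]] // _;
  by rewrite /= !(big_cons, big_nil) /M_at_e1 /= ?(mulr1, mul1r, addr0, add0r).
Qed.

Lemma epsP_mulQ1 (f : qsym k) b : epsP (mulQ f [:: (1, b)]) = epsP f * M_at_e1 k b.
Proof.
rewrite /epsP /mulQ big_flatten big_map mulr_suml; apply: eq_bigr => p _.
rewrite /= cats0 big_map -mulrA -stuffle_e1 mulr_sumr; apply: eq_bigr => s _.
by rewrite mulr1.
Qed.

Lemma epsP_sumQ (fs : seq (qsym k)) : epsP (sumQ fs) = \sum_(f <- fs) epsP f.
Proof. by rewrite /epsP /sumQ big_flatten. Qed.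

Lemma sum_if_eqT (V : zmodType) (T : eqType) (r : seq T) (s : T) (X : V) : uniq r ->
  \sum_(m <- r) (if m == s then X else 0) = if s \in r then X else 0.
Proof.
elim: r => [|a r IH] /=; first by rewrite big_nil.
move=> /andP [ar ur]; rewrite big_cons IH // in_cons.
have [<-|ne] := eqVneq a s.
  by rewrite (negbTE ar) addr0.
by rewrite add0r.
Qed.

Lemma epsP_coef (f : qsym k) L : uniq L -> (forall p, p \in f -> p.2 \in L) ->
  epsP f = \sum_(g <- L) coefQ f g * M_at_e1 k g.
Proof.
move=> uL hf; rewrite /epsP /coefQ.
under [RHS]eq_bigr do rewrite mulr_suml big_mkcond.
rewrite exchange_big /=; apply: eq_big_seq => p pf.
transitivity (\sum_(g <- L) (if g == p.2 then p.1 * M_at_e1 k p.2 else 0)).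
  by rewrite sum_if_eqT // hf.
by apply: eq_bigr => g _; rewrite eq_sym; case: eqP => // ->.
Qed.

Lemma all_take_comp a i : is_comp a -> is_comp (take i a).
Proof. by move=> ca; apply/allP => x /mem_take; apply: (allP ca). Qed.
Lemma all_drop_comp a i : is_comp a -> is_comp (drop i a).
Proof. by move=> ca; apply/allP => x /mem_drop; apply: (allP ca). Qed.

Lemma epsP_SQ (SQ : seq nat -> qsym k) : is_QSym_antipode SQ ->
  forall a, is_comp a -> epsP (SQ a) = (-1) ^+ size a.
Proof.
move=> [hc [h2 _]].
have key : forall a, is_comp a ->
   \sum_(i <- iota 0 (size a).+1) epsP (SQ (take i a)) * M_at_e1 k (drop i a)
   = (a == [::])%:R.
  move=> a ca.
  set F := sumQ [seq mulQ (SQ (take i a)) [:: (1, drop i a)] | i <- iota 0 (size a).+1].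
  have -> : \sum_(i <- iota 0 (size a).+1) epsP (SQ (take i a)) * M_at_e1 k (drop i a)
     = epsP F.
    by rewrite epsP_sumQ big_map; apply: eq_bigr => i _; rewrite epsP_mulQ1.
  have FC : forall p, p \in F -> is_comp p.2.
    move=> p; rewrite /F /sumQ => /flattenP [q /mapP [i _ ->]].
    rewrite /mulQ => /flattenP [r /mapP [u uin ->]] /=.
    rewrite cats0 => /mapP [s sin ->] /=.
    by apply: (allP (stuffle_comp (allP (hc _ (all_take_comp i ca)) _ uin) (all_drop_comp i ca))).
  rewrite (epsP_coef (L := undup ([::] :: map snd F))) ?undup_uniq; last first.
    by move=> p pF; rewrite mem_undup in_cons (map_f snd pF) orbT.
  by [].
  transitivity (\sum_(g <- undup ([::] :: [seq i.2 | i <- F]))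
                  (if g == [::] then ((a == [::])%:R : k) else 0)).
    apply: eq_big_seq => g; rewrite mem_undup in_cons => gin.
    have cg : is_comp g.
      case/orP: gin => [/eqP -> //|/mapP [p pF ->]]; exact: FC.
    rewrite h2 //; have [->|gn] := eqVneq g [::].
      by rewrite andbT /M_at_e1 /= mulr1; case: (a == [::]).
    by rewrite andbF mul0r.
  by rewrite sum_if_eqT ?undup_uniq // mem_undup mem_head.
move=> a; move: {2}(size a) (erefl (size a)) => n; elim: n a => [|n IH] a sa ca.
  move: sa => /size0nil ->; have := key [::] is_true_true.
  by rewrite /= big_cons big_nil addr0 /M_at_e1 /= mulr1 => ->; rewrite expr0.
have := key a ca; rewrite sa -addn2 iotaD big_cat /= !big_cons big_nil addr0 add0n.
rewrite big1_seq; last first.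
  move=> i /andP [_]; rewrite mem_iota add0n => hi.
  by rewrite /M_at_e1 size_drop sa leqNgt (_ : (1 < n.+1 - i)%N) ?mulr0 //; lia.
rewrite add0r IH ?size_takel ?sa ?all_take_comp //.
rewrite (_ : take n.+1 a = a); last by rewrite -sa take_size.
rewrite /M_at_e1 !size_drop sa subSn // !subnn /= !mulr1 (_ : (a == [::]) = false); last by rewrite -size_eq0 sa.
move=> /eqP; rewrite addrC addr_eq0 => /eqP ->.
by rewrite exprS mulN1r.
Qed.

End QSymPart.

Lemma sum_nz (V : zmodType) (u : seq nat -> V) (L : seq (seq nat)) :
  \sum_(a <- L) u a = \sum_(a <- [seq a <- L | u a != 0]) u a.
Proof.
rewrite big_filter (bigID (fun a => u a == 0)) /= big1 ?add0r //.
by move=> a /eqP.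
Qed.

Lemma sum_supp (V : zmodType) (u : seq nat -> V) (L1 L2 : seq (seq nat)) :
  uniq L1 -> uniq L2 -> (forall a, a \in L1 -> is_comp a) ->
  (forall a, a \in L2 -> is_comp a) ->
  (forall a, is_comp a -> u a != 0 -> a \in L1) ->
  (forall a, is_comp a -> u a != 0 -> a \in L2) ->
  \sum_(a <- L1) u a = \sum_(a <- L2) u a.
Proof.
move=> u1 u2 c1 c2 s1 s2.
rewrite sum_nz [RHS]sum_nz; apply: perm_big; apply: uniq_perm; rewrite ?filter_uniq //.
move=> a; rewrite !mem_filter; case: (eqVneq (u a) 0) => //= ua.
apply/idP/idP => ha; [apply: s2 (c1 _ ha) ua | apply: s1 (c2 _ ha) ua].
Qed.

Theorem corollary6p3 (k : comNzRingType) (H : comAlgType k)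
  (delta : H -> seq (H * H)) (eps : H -> k) (S : H -> H) (pi : nat -> H -> H)
  (hH : is_cc_graded_hopf delta eps S pi)
  (SQ : seq nat -> qsym k) (hSQ : is_QSym_antipode SQ) :
  forall h : H,
    comp_fsum_eq (fun alpha => epsP (SQ alpha) *: xi delta eps pi alpha h) (S h).
Proof.
move=> h.
have eS := epsP_SQ hSQ.
have [N [_ hN]] := pi_decomp hH h.
have xih : forall a, xi delta eps pi a h = \sum_(m < N) xi delta eps pi a (pi m h).
  by move=> a; rewrite {1}hN (lin_sum _ _ _ (lin_xi hH a)).
have xih2 : forall a, xi delta eps pi a h =
    if (sumn a < N)%N then xi delta eps pi a (pi (sumn a) h) else 0.
  move=> a; rewrite xih -(big_mkord xpredT (fun m => xi delta eps pi a (pi m h))).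
  rewrite -[(sumn a < N)%N]/(0 <= sumn a < N)%N -mem_index_iota.
  rewrite -sum_if_eq ?iota_uniq //; apply: eq_bigr => m _.
  have [->//|ne] := eqVneq m (sumn a).
  by apply: (xi_vanish hH (pi_idem hH _ _)); rewrite eq_sym.
have supp : forall a, epsP (SQ a) *: xi delta eps pi a h != 0 -> (sumn a < N)%N.
  move=> a; rewrite xih2; case: ifP => // _; by rewrite scaler0 eqxx.
split.
  exists (flatten [seq compsF m m | m <- iota 0 N]) => a ca ta.
  apply/flattenP; exists (compsF (sumn a) (sumn a)).
    by apply: map_f; rewrite mem_iota add0n supp.
  by rewrite compsF_mem // ca eqxx.
move=> L uL cL covL.
transitivity (\sum_(m < N) \sum_(a <- L) sg k a *: xi delta eps pi a (pi m h)); last first.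
  rewrite exchange_big /=; apply: eq_big_seq => a aL.
  by rewrite eS ?(allP cL) // xih scaler_sumr.
rewrite {1}hN (lin_sum _ _ _ (lin_S hH)); apply: eq_bigr => m _.
rewrite (main_deg hH (f := m) (n := m) (leqnn m) (pi_idem hH m h)).
have vz : forall a, sg k a *: xi delta eps pi a (pi m h) != 0 -> sumn a = m.
  move=> a; apply: contraNeq => ne.
  by rewrite (xi_vanish hH (pi_idem hH _ _)) ?scaler0.
apply: sum_supp.
- exact: compsF_uniq.
- exact: uL.
- by move=> a; rewrite compsF_mem // => /andP [].
- by move=> a aL; apply: (allP cL).
- by move=> a ca /vz sa; rewrite compsF_mem // ca sa eqxx.
move=> a ca /[dup] /vz sa ua; apply: covL => //.
by rewrite eS // xih2 sa ltn_ord.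
Qed.
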